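(* Consider the setting described in the context, with $\rho>0$, $\gamma>0$, symmetric positive semidefinite $P_i,Q_i\in\mathbb{R}^{n\times n}$, and let $\bm{u}^k=(\check{\bm{W}}^k,\hat{\bm{W}}^k,\lambda^k)$ be the sequence generated by the algorithm and $\bm{u}^*=(\check{\bm{W}}^*,\hat{\bm{W}}^*,\lambda^* )$ a KKT point of (P1). Then for every $k\ge 1$, $$\|\bm{u}^k-\bm{u}^*\|^2_{\bm{G}}-\|\bm{u}^{k+1}-\bm{u}^*\|^2_{\bm{G}}\ \ge\ \|\bm{u}^k-\bm{u}^{k+1}\|^2_{\bm{M}},$$ where $$\|\bm{u}^k-\bm{u}^{k+1}\|^2_{\bm{M}}=\|\check{\bm{W}}^k-\check{\bm{W}}^{k+1}\|^2_{\bm{G}_1}+\|\hat{\bm{W}}^k-\hat{\bm{W}}^{k+1}\|^2_{\bm{G}_2-\bm{G}_3}+\frac{2-\gamma}{\gamma^2\rho}\|\lambda^k-\lambda^{k+1}\|^2+\frac{2}{\gamma}(\lambda^k-\lambda^{k+1})^T\bm{A}(\check{\bm{W}}^k-\check{\bm{W}}^{k+1}).$$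
   Context: Let $\mathcal{G}=(\mathcal{V},\mathcal{E})$ be a connected undirected graph with $\mathcal{V}=\{1,\dots,N\}$, $N\ge 2$, and let $d_i$ be the degree of $i$. Variables are $\check{\bm{w}}_i,\hat{\bm{w}}_i\in\mathbb{R}^n$; write $\check{\bm{W}}=(\check{\bm{w}}_1,\dots,\check{\bm{w}}_N)\in\mathbb{R}^{Nn}$, $\hat{\bm{W}}$ likewise, $\bm{z}_i=(\check{\bm{w}}_i,\hat{\bm{w}}_i)$, $\bm{Z}=(\check{\bm{W}},\hat{\bm{W}})$. The matrix $\bm{A}\in\mathbb{R}^{|\mathcal{E}|n\times Nn}$ has one block row per edge $\{i,j\}$ ($i<j$) with $I_n$ in block column $i$, $-I_n$ in block column $j$ and zeros elsewhere; $A_i$ denotes its $i$-th block column, so $\bm{A}\check{\bm{W}}=\sum_i A_i\check{\bm{w}}_i$, $A_i^TA_i=d_iI_n$, and for $i\ne j$, $A_i^TA_j=-I_n$ if $\{i,j\}\in\mathcal{E}$ and $0$ otherwise. Each $f_i:\mathbb{R}^n\times\mathbb{R}^n\to\mathbb{R}$ is differentiable and jointly convex in $(\check{\bm{w}}_i,\hat{\bm{w}}_i)$, with $\|\nabla f_i(\bm{z}^1)-\nabla f_i(\bm{z}^2)\|\le C_i\|\bm{z}^1-\bm{z}^2\|$ for all $\bm{z}^1,\bm{z}^2$. Let $\mu_1\ge0$, $\mu_2>0$, $F_i(\bm{z}_i)=f_i(\check{\bm{w}}_i,\hat{\bm{w}}_i)+\frac{\mu_1}{2}\|\check{\bm{w}}_i\|^2+\frac{\mu_2}{2}\|\hat{\bm{w}}_i\|^2$,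 $\bm{F}(\bm{Z})=\sum_iF_i(\bm{z}_i)$, and let $m$ be a constant with $0<m\le\mu_2$ (a strong convexity modulus of $\hat{\bm{w}}\mapsto\frac{\mu_2}{2}\|\hat{\bm{w}}\|^2$). Problem (P1): minimize $\bm{F}(\bm{Z})$ subject to $\bm{A}\check{\bm{W}}=0$. A KKT point of (P1) is $(\check{\bm{W}}^*,\hat{\bm{W}}^*,\lambda^* )$ with $\bm{A}\check{\bm{W}}^*=0$, $A_i^T\lambda^*=\nabla_{\check{\bm{w}}_i}F_i(\bm{z}_i^* )$, $\nabla_{\hat{\bm{w}}_i}F_i(\bm{z}_i^* )=0$ for all $i$. Algorithm: with $\mathcal{L}_\rho(\check{\bm{W}},\hat{\bm{W}},\lambda)=\bm{F}(\bm{Z})-\lambda^T\bm{A}\check{\bm{W}}+\frac{\rho}{2}\|\bm{A}\check{\bm{W}}\|^2$, starting from arbitrary $\check{\bm{W}}^0,\hat{\bm{W}}^0,\lambda^0$, for $k=0,1,\dots$: (i) for all $i$ in parallel, $\check{\bm{w}}_i^{k+1}=\arg\min_{\check{\bm{w}}_i}\mathcal{L}_\rho(\check{\bm{w}}_i,\check{\bm{W}}^k_{-i},\hat{\bm{W}}^k,\lambda^k)+\frac12\|\check{\bm{w}}_i-\check{\bm{w}}_i^k\|^2_{P_i}$, where $\check{\bm{W}}^k_{-i}$ are the other blocks at iteration $k$; (ii) $\lambda^{k+1}=\lambda^k-\gamma\rho\bm{A}\check{\bm{W}}^{k+1}$; (iii) for all $i$ in parallel, $\hat{\bm{w}}_i^{k+1}=\arg\min_{\hat{\bm{w}}_i}F_i(\check{\bm{w}}_i^{k+1},\hat{\bm{w}}_i)+\frac12\|\hat{\bm{w}}_i-\hat{\bm{w}}_i^k\|^2_{Q_i}$.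 Notation: $\|x\|_S^2=x^TSx$; $\bm{G}_1=\mathrm{blkdiag}(\rho A_i^TA_i+P_i)_{i}$, $\bm{G}_2=\mathrm{blkdiag}(Q_i)_i$, $\bm{G}_3=\mathrm{blkdiag}\big(\frac{C_i}{m}(C_i+m)I_n\big)_i$, $\bm{G}=\mathrm{blkdiag}(\bm{G}_1,\bm{G}_2,\frac{1}{\gamma\rho}I)$, and $\bm{M}=\begin{bmatrix}\bm{G}_1&0&\frac1\gamma\bm{A}^T\\0&\bm{G}_2-\bm{G}_3&0\\\frac1\gamma\bm{A}&0&\frac{2-\gamma}{\gamma^2\rho}I\end{bmatrix}$. *)

(* Defs.v *)
From HB Require Import structures.
From mathcomp Require Import all_boot all_order all_algebra.
From mathcomp Require Import all_classical all_reals all_analysis.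
Unset Implicit Arguments. Unset Printing Implicit Defensive.
Import Order.TTheory GRing.Theory Num.Theory.
Import numFieldNormedType.Exports.
Local Open Scope ring_scope.

Section Defs.
Variables (R : realType) (N n : nat).

Definition dotv (x y : 'cV[R]_n) : R := (x^T *m y) 0 0.
Definition sqn (x : 'cV[R]_n) : R := dotv x x.
Definition qform (S : 'M[R]_n) (x : 'cV[R]_n) : R := (x^T *m S *m x) 0 0.

Definition simple_connected_graph (adj : rel 'I_N) : Prop :=
  [/\ symmetric adj, irreflexive adj & forall i j, connect adj i j].

(** Edges {i,j} with i < j: the block rows of the matrix A. *)
Definition edge (adj : rel 'I_N) :=
  {e : 'I_N * 'I_N | ((val e.1 < val e.2)%N && adj e.1 e.2)}.

(** The block coefficient of A at (edge e, node i): I_n if i is the smaller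
    end, -I_n if i is the larger end, 0 otherwise. *)
Definition Acoef (adj : rel 'I_N) (e : edge adj) (i : 'I_N) : R :=
  ((fst (val e) == i)%:R - (snd (val e) == i)%:R).

Definition Acol (adj : rel 'I_N) (i : 'I_N) (x : 'cV[R]_n) : edge adj -> 'cV[R]_n :=
  fun e => Acoef adj e i *: x.

Definition Aop (adj : rel 'I_N) (W : 'I_N -> 'cV[R]_n) : edge adj -> 'cV[R]_n :=
  fun e => \sum_(i < N) Acol adj i (W i) e.

Definition AcolT (adj : rel 'I_N) (i : 'I_N) (l : edge adj -> 'cV[R]_n) : 'cV[R]_n :=
  \sum_(e : edge adj) Acoef adj e i *: l e.

Definition dotE (adj : rel 'I_N) (l m : edge adj -> 'cV[R]_n) : R :=
  \sum_(e : edge adj) dotv (l e) (m e).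
Definition sqnE (adj : rel 'I_N) (l : edge adj -> 'cV[R]_n) : R := dotE adj l l.

Definition grad_c (F : 'cV[R]_n * 'cV[R]_n -> R) (z : 'cV[R]_n * 'cV[R]_n)
  : 'cV[R]_n := \col_(j < n) ('d F z (delta_mx j 0, 0)).
Definition grad_h (F : 'cV[R]_n * 'cV[R]_n -> R) (z : 'cV[R]_n * 'cV[R]_n)
  : 'cV[R]_n := \col_(j < n) ('d F z (0, delta_mx j 0)).

Definition norm2 (z : 'cV[R]_n * 'cV[R]_n) : R := Num.sqrt (sqn z.1 + sqn z.2).

Definition jointly_convex (f : 'cV[R]_n * 'cV[R]_n -> R) : Prop :=
  forall (z1 z2 : 'cV[R]_n * 'cV[R]_n) (t : R), 0 <= t -> t <= 1 ->
    f (t *: z1 + (1 - t) *: z2) <= t * f z1 + (1 - t) * f z2.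

Definition grad_lipschitz (f : 'cV[R]_n * 'cV[R]_n -> R) (C : R) : Prop :=
  forall z1 z2 : 'cV[R]_n * 'cV[R]_n,
    norm2 (grad_c f z1 - grad_c f z2, grad_h f z1 - grad_h f z2)
      <= C * norm2 (z1 - z2).

Definition psd_sym (S : 'M[R]_n) : Prop :=
  S^T = S /\ forall x : 'cV[R]_n, 0 <= qform S x.

Definition Fi (f : 'cV[R]_n * 'cV[R]_n -> R) (mu1 mu2 : R)
  (z : 'cV[R]_n * 'cV[R]_n) : R :=
  f z + mu1 / 2 * sqn z.1 + mu2 / 2 * sqn z.2.

Definition Lrho (adj : rel 'I_N) (f : 'I_N -> 'cV[R]_n * 'cV[R]_n -> R)
  (mu1 mu2 rho : R) (Wc Wh : 'I_N -> 'cV[R]_n) (l : edge adj -> 'cV[R]_n) : R :=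
  \sum_(i < N) Fi (f i) mu1 mu2 (Wc i, Wh i) - dotE adj l (Aop adj Wc)
  + rho / 2 * sqnE adj (Aop adj Wc).

Definition upd (W : 'I_N -> 'cV[R]_n) (i : 'I_N) (w : 'cV[R]_n) : 'I_N -> 'cV[R]_n :=
  fun j => if j == i then w else W j.

Definition KKT (adj : rel 'I_N) (f : 'I_N -> 'cV[R]_n * 'cV[R]_n -> R)
  (mu1 mu2 : R) (Wc Wh : 'I_N -> 'cV[R]_n) (l : edge adj -> 'cV[R]_n) : Prop :=
  [/\ Aop adj Wc = (fun _ => 0),
      forall i, AcolT adj i l = grad_c (Fi (f i) mu1 mu2) (Wc i, Wh i)
    & forall i, grad_h (Fi (f i) mu1 mu2) (Wc i, Wh i) = 0].

(** The sequence generated by the algorithm (steps (i)-(iii), each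
    argmin realized by a minimizer). *)
Definition algo_seq (adj : rel 'I_N) (f : 'I_N -> 'cV[R]_n * 'cV[R]_n -> R)
  (mu1 mu2 rho gamma : R) (P Q : 'I_N -> 'M[R]_n)
  (Wc Wh : nat -> 'I_N -> 'cV[R]_n) (l : nat -> edge adj -> 'cV[R]_n) : Prop :=
  forall k : nat,
  [/\ forall i (w : 'cV[R]_n),
        Lrho adj f mu1 mu2 rho (upd (Wc k) i (Wc k.+1 i)) (Wh k) (l k)
          + 1/2 * qform (P i) (Wc k.+1 i - Wc k i)
        <= Lrho adj f mu1 mu2 rho (upd (Wc k) i w) (Wh k) (l k)
          + 1/2 * qform (P i) (w - Wc k i),
      l k.+1 = (fun e => l k e - (gamma * rho) *: Aop adj (Wc k.+1) e)
    & forall i (w : 'cV[R]_n),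
        Fi (f i) mu1 mu2 (Wc k.+1 i, Wh k.+1 i) + 1/2 * qform (Q i) (Wh k.+1 i - Wh k i)
        <= Fi (f i) mu1 mu2 (Wc k.+1 i, w) + 1/2 * qform (Q i) (w - Wh k i)].

(** ||x||^2 for the i-th diagonal block of G_1 = blkdiag(rho A_i^T A_i + P_i). *)
Definition qG1 (adj : rel 'I_N) (rho : R) (P : 'I_N -> 'M[R]_n) (i : 'I_N)
  (x : 'cV[R]_n) : R :=
  dotv x (rho *: AcolT adj i (Acol adj i x) + P i *m x).

(** ||u||_G^2 with G = blkdiag(G_1, G_2, 1/(gamma rho) I). *)
Definition normG (adj : rel 'I_N) (rho gamma : R) (P Q : 'I_N -> 'M[R]_n)
  (Wc Wh : 'I_N -> 'cV[R]_n) (l : edge adj -> 'cV[R]_n) : R :=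
  \sum_(i < N) qG1 adj rho P i (Wc i) + \sum_(i < N) qform (Q i) (Wh i)
  + 1 / (gamma * rho) * sqnE adj l.

Definition normM (adj : rel 'I_N) (rho gamma m : R) (C : 'I_N -> R)
  (P Q : 'I_N -> 'M[R]_n)
  (Wc Wh : 'I_N -> 'cV[R]_n) (l : edge adj -> 'cV[R]_n) : R :=
  \sum_(i < N) qG1 adj rho P i (Wc i)
  + \sum_(i < N) qform (Q i - (C i / m * (C i + m)) *: 1%:M) (Wh i)
  + (2 - gamma) / (gamma ^+ 2 * rho) * sqnE adj l
  + 2 / gamma * dotE adj l (Aop adj Wc).

End Defs.

Arguments dotv {R n}. Arguments sqn {R n}. Arguments qform {R n}.
Arguments simple_connected_graph {N}.
Arguments edge {N}.
Arguments Acoef {R N adj}. Arguments Acol {R N n}. Arguments Aop {R N n}.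
Arguments AcolT {R N n}. Arguments dotE {R N n adj}. Arguments sqnE {R N n adj}.
Arguments grad_c {R n}. Arguments grad_h {R n}. Arguments norm2 {R n}.
Arguments jointly_convex {R n}. Arguments grad_lipschitz {R n}.
Arguments psd_sym {R n}. Arguments Fi {R n}. Arguments Lrho {R N n}.
Arguments upd {R N n}. Arguments KKT {R N n}. Arguments algo_seq {R N n}.
Arguments qG1 {R N n}. Arguments normG {R N n}. Arguments normM {R N n}.

(* Main.v *)
Require Import Defs.
From HB Require Import structures.
From mathcomp Require Import all_boot all_order all_algebra.
From mathcomp Require Import all_classical all_reals all_analysis.
From mathcomp Require Import ring lra.
Import Order.TTheory GRing.Theory Num.Theory.
Import numFieldNormedType.Exports.
Local Open Scope ring_scope.

Section A.
Local Open Scope classical_set_scope.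
Local Open Scope ring_scope.
Context {R : realType} {n : nat}.
Local Notation V := ('cV[R]_n * 'cV[R]_n)%type.

Lemma fst_diff (z : V) : differentiable (fst : V -> 'cV[R]_n) z.
Proof.
have @fl : {linear V -> 'cV[R]_n}.
  by exists (fun z : V => z.1); do 2![eexists]; do ?[constructor] => //.
rewrite (_ : fst = fl) //; apply: linear_differentiable => x /=.
exact: cvg_fst.
Qed.

Lemma snd_diff (z : V) : differentiable (snd : V -> 'cV[R]_n) z.
Proof.
have @fl : {linear V -> 'cV[R]_n}.
  by exists (fun z : V => z.2); do 2![eexists]; do ?[constructor] => //.
rewrite (_ : snd = fl) //; apply: linear_differentiable => x /=.
exact: cvg_snd.
Qed.

Lemma poly_derive (c0 a b t : R) :
  is_derive t 1 (fun s : R => c0 + a * s + b * s ^+ 2) (a + b * (2 * t)).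
Proof.
have -> : (fun s : R => c0 + a * s + b * s ^+ 2) =
  (cst c0 + a \*: (id : R -> R)) + b \*: ((id : R -> R) ^+ 2).
  by apply/funext => s /=.
apply: is_derive_eq.
by rewrite /= add0r expr1 ![_%:A]mulr1 [b *: _]/(b * _).
Qed.

Implicit Types x y z : 'cV[R]_n.

Lemma dotvE (x y : 'cV[R]_n) : dotv x y = \sum_j x j 0 * y j 0.
Proof. by rewrite /dotv !mxE; apply: eq_bigr => j _; rewrite mxE. Qed.

Lemma dotvC x y : dotv x y = dotv y x.
Proof. by rewrite !dotvE; apply: eq_bigr => j _; rewrite mulrC. Qed.

Lemma dotvDl x y z : dotv (x + y) z = dotv x z + dotv y z.
Proof. by rewrite !dotvE -big_split; apply: eq_bigr => j _; rewrite mxE mulrDl. Qed.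

Lemma dotvDr x y z : dotv z (x + y) = dotv z x + dotv z y.
Proof. by rewrite dotvC dotvDl !(dotvC z). Qed.

Lemma dotvZl a x y : dotv (a *: x) y = a * dotv x y.
Proof. by rewrite !dotvE mulr_sumr; apply: eq_bigr => j _; rewrite mxE mulrA. Qed.

Lemma dotvZr a x y : dotv y (a *: x) = a * dotv y x.
Proof. by rewrite dotvC dotvZl dotvC. Qed.

Lemma dotvNl x y : dotv (- x) y = - dotv x y.
Proof. by rewrite -scaleN1r dotvZl mulN1r. Qed.

Lemma dotvNr x y : dotv y (- x) = - dotv y x.
Proof. by rewrite dotvC dotvNl dotvC. Qed.

Lemma dotvBl x y z : dotv (x - y) z = dotv x z - dotv y z.
Proof. by rewrite dotvDl dotvNl. Qed.

Lemma dotvBr x y z : dotv z (x - y) = dotv z x - dotv z y.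
Proof. by rewrite dotvDr dotvNr. Qed.

Lemma dotv0l x : dotv 0 x = 0.
Proof. by rewrite -(scale0r 0) dotvZl mul0r. Qed.

Lemma dotv0r x : dotv x 0 = 0.
Proof. by rewrite dotvC dotv0l. Qed.

Lemma sqn_ge0 x : 0 <= sqn x.
Proof. by rewrite /sqn dotvE; apply: sumr_ge0 => j _; rewrite -expr2 sqr_ge0. Qed.

Lemma sqn_eq0 x : sqn x = 0 -> x = 0.
Proof.
rewrite /sqn dotvE => /eqP; rewrite psumr_eq0 => [/allP H|j _]; last first.
  by rewrite -expr2 sqr_ge0.
apply/matrixP => i j; rewrite (ord1 j) mxE.
by have /(_ (mem_index_enum i)) := H i; rewrite implyTb mulf_eq0 orbb => /eqP.
Qed.

Lemma sqnD x y : sqn (x + y) = sqn x + 2 * dotv x y + sqn y.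
Proof. by rewrite /sqn !dotvDl !dotvDr (dotvC y x); ring. Qed.

Lemma sqnZ a x : sqn (a *: x) = a ^+ 2 * sqn x.
Proof. by rewrite /sqn dotvZl dotvZr mulrA expr2. Qed.

Lemma CS x y : dotv x y <= Num.sqrt (sqn x) * Num.sqrt (sqn y).
Proof.
have [y0|yn0] := eqVneq (sqn y) 0.
  by rewrite (sqn_eq0 y y0) dotv0r mulr_ge0 // sqrtr_ge0.
have sy : 0 < sqn y by rewrite lt_def yn0 sqn_ge0.
have H : dotv x y ^+ 2 <= sqn x * sqn y.
  have := sqn_ge0 (x + (- (dotv x y / sqn y)) *: y).
  rewrite sqnD sqnZ dotvZr.
  set c := dotv x y; set s := sqn y => H.
  have E : sqn x * s - c ^+ 2 = s * (sqn x + 2 * (- (c / s) * c) + (- (c / s)) ^+ 2 * s).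
    by field.
  by rewrite -subr_ge0 E mulr_ge0 // ltW.
rewrite -sqrtrM ?sqn_ge0 //; apply: le_trans (ler_norm _) _.
by rewrite -sqrtr_sqr ler_wsqrtr.
Qed.

Lemma pair_sum (I : Type) (r : seq I) (F G : I -> 'cV[R]_n) :
  (\sum_(i <- r) F i, \sum_(i <- r) G i) = \sum_(i <- r) ((F i, G i) : V).
Proof.
by elim/big_rec3: _ => // i a b c _ <-.
Qed.

Lemma col_sum_delta (w : 'cV[R]_n) : w = \sum_j w j 0 *: delta_mx j 0.
Proof.
rewrite {1}(matrix_sum_delta w); apply: eq_bigr => j _.
by rewrite big_ord1.
Qed.

Lemma scale_pair c (a b : 'cV[R]_n) : c *: ((a, b) : V) = (c *: a, c *: b).
Proof. by []. Qed.

Lemma grad_dec (f : V -> R) (z v : V) :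
  'd f z v = dotv (grad_c f z) v.1 + dotv (grad_h f z) v.2.
Proof.
case: v => a b /=.
have -> : ((a, b) : V) = (a, 0) + (0, b) by rewrite -[RHS]/((a + 0, 0 + b)) addr0 add0r.
rewrite linearD; congr (_ + _).
  have -> : ((a, 0) : V) = \sum_j (a j 0 *: ((delta_mx j 0, 0) : V)).
    under eq_bigr do rewrite scale_pair.
    rewrite -pair_sum -col_sum_delta big1 // => j _.
    by rewrite scaler0.
  rewrite linear_sum dotvE; apply: eq_bigr => j _.
  by rewrite linearZZ /grad_c mxE mulrC.
have -> : ((0, b) : V) = \sum_j (b j 0 *: ((0, delta_mx j 0) : V)).
  under eq_bigr do rewrite scale_pair.
  rewrite -pair_sum -col_sum_delta big1 // => j _.
  by rewrite scaler0.
rewrite linear_sum dotvE; apply: eq_bigr => j _.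
by rewrite linearZZ /grad_h mxE mulrC.
Qed.


Lemma line_derive (f : V -> R) (z v : V) t : differentiable f (t *: v + z) ->
  is_derive t 1 (fun s : R => f (s *: v + z)) ('d f (t *: v + z) v).
Proof.
move=> df.
have E : forall h : R, ((h *: 1 + t) *: v + z) = h *: v + (t *: v + z).
  by move=> h; rewrite [h *: 1]mulr1 scalerDl addrA.
apply: DeriveDef.
  rewrite /derivable (_ : (fun h => _) =
     (fun h => h^-1 *: ((f \o shift (t *: v + z)) (h *: v) - f (t *: v + z)))).
    exact: diff_derivable.
  by apply/funext => h /=; rewrite E.
rewrite -deriveE // /derive (_ : (fun h => _) =
     (fun h => h^-1 *: ((f \o shift (t *: v + z)) (h *: v) - f (t *: v + z)))) //.
by apply/funext => h /=; rewrite E.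
Qed.


Lemma line_poly_derive (f : V -> R) (z v : V) (c0 al be t : R) :
  (forall w : V, differentiable f w) ->
  is_derive t 1 (fun s : R => f (s *: v + z) + (c0 + al * s + be * s ^+ 2))
    ('d f (t *: v + z) v + (al + be * (2 * t))).
Proof.
move=> df.
have -> : (fun s : R => f (s *: v + z) + (c0 + al * s + be * s ^+ 2)) =
  (fun s : R => f (s *: v + z)) + (fun s : R => c0 + al * s + be * s ^+ 2) by [].
apply: is_deriveD; [exact: line_derive | exact: poly_derive].
Qed.

Lemma fermat_line (f : V -> R) (z v : V) (al be : R) :
  (forall w : V, differentiable f w) ->
  (forall t, f z <= f (t *: v + z) + (al * t + be * t ^+ 2)) ->
  'd f z v + al = 0.
Proof.
move=> df H.
set psi := fun s : R => f (s *: v + z) + (0 + al * s + be * s ^+ 2).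
have D := fun t => line_poly_derive f z v 0 al be t df.
have M : is_derive (0:R) (1:R) psi 0.
  apply: (@derive1_at_min R psi (-1) 1 0).
  - by rewrite (le_trans (lerN10 R)) ?ler01.
  - by move=> t _; exact: (@ex_derive _ _ _ _ _ _ _ (D t)).
  - by rewrite in_itv /= ltrN10 ltr01.
  - move=> t _; rewrite /psi scale0r add0r mulr0 expr0n /= mulr0 !addr0.
    by rewrite add0r; exact: H.
have := @derive_val _ _ _ _ _ _ _ M.
rewrite (@derive_val _ _ _ _ _ _ _ (D 0)) scale0r add0r mulr0 mulr0 addr0.
by [].
Qed.


Lemma conv_grad (f : V -> R) (x y : V) : jointly_convex f ->
  differentiable f x -> f x + 'd f x (y - x) <= f y.
Proof.
move=> cf dfx.
set v := y - x; set g := fun s : R => f (s *: v + x).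
have D : is_derive (0:R) (1:R) g ('d f x v).
  have := @line_derive f x v 0; rewrite scale0r add0r; exact.
rewrite -(@derive_val _ _ _ _ _ _ _ D) -lerBrDl.
rewrite ['D_1 g 0]cvg_at_rightE; last exact: (@ex_derive _ _ _ _ _ _ _ D).
apply: limr_le.
  have dfc := (@ex_derive _ _ _ _ _ _ _ D).
  rewrite -(cvg_at_rightE (fun h : R => h^-1 *: ((g \o shift 0) _ - g 0))) //.
  apply: cvg_trans dfc; apply: cvg_app.
  move=> A [e egt0 Ae]; exists e => // u ue ugt0; apply: Ae => //.
  exact/lt0r_neq0.
near=> h.
have h0 : 0 < h by near: h; exists 1 => /=.
have h1 : h <= 1.
  near: h; exists 1 => //= u; rewrite /ball_ /= sub0r normrN => /ltW Hu _.
  exact: le_trans (ler_norm u) Hu.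
rewrite /= /g [h *: 1]mulr1 addr0 scale0r add0r.
rewrite -[_ *: _]/(h^-1 * _) ler_pdivrMl //.
have := cf y x h (ltW h0) h1.
have -> : h *: y + (1 - h) *: x = h *: v + x.
  by rewrite /v scalerBr scalerBl scale1r addrA [RHS]addrAC.
move=> Hc; rewrite lerBlDr (le_trans Hc) //.
by rewrite le_eqVlt; apply/orP; left; apply/eqP; ring.
Unshelve. all: by end_near.
Qed.


Lemma norm2_ge0 (z : V) : 0 <= norm2 z.
Proof. exact: sqrtr_ge0. Qed.

Lemma lip_h (f : V -> R) Cc (z1 z2 : V) : grad_lipschitz f Cc ->
  Num.sqrt (sqn (grad_h f z1 - grad_h f z2)) <= Cc * norm2 (z1 - z2).
Proof.
move=> /(_ z1 z2); apply: le_trans.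
rewrite /norm2 /= ler_wsqrtr // lerDr sqn_ge0 //.
Qed.


(* opaque wrappers, to prevent expensive conversions between differentials *)
Lemma dL_ex : {d : (V -> R) -> V -> V -> R | forall f (z v : V), d f z v = 'd f z v}.
Proof. by exists (fun (f : V -> R) (z v : V) => 'd f z v). Qed.
Definition dL := proj1_sig dL_ex.
Lemma dLE f (z v : V) : dL f z v = 'd f z v.
Proof. exact: (proj2_sig dL_ex). Qed.

Lemma gcL_ex : {g : (V -> R) -> V -> 'cV[R]_n | g = grad_c}.
Proof. by exists grad_c. Qed.
Definition gcL := proj1_sig gcL_ex.
Lemma gcLE : gcL = grad_c.
Proof. exact: (proj2_sig gcL_ex). Qed.

Lemma ghL_ex : {g : (V -> R) -> V -> 'cV[R]_n | g = grad_h}.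
Proof. by exists grad_h. Qed.
Definition ghL := proj1_sig ghL_ex.
Lemma ghLE : ghL = grad_h.
Proof. exact: (proj2_sig ghL_ex). Qed.

Lemma grad_decL (f : V -> R) (z v : V) :
  dL f z v = dotv (gcL f z) v.1 + dotv (ghL f z) v.2.
Proof. by rewrite dLE gcLE ghLE; exact: grad_dec. Qed.

Lemma line_poly_deriveL (f : V -> R) (z v : V) (c0 al be t : R) :
  (forall w : V, differentiable f w) ->
  is_derive t 1 (fun s : R => f (s *: v + z) + (c0 + al * s + be * s ^+ 2))
    (dL f (t *: v + z) v + (al + be * (2 * t))).
Proof. by rewrite dLE; exact: line_poly_derive. Qed.

Lemma fermat_lineL (f : V -> R) (z v : V) (al be : R) :
  (forall w : V, differentiable f w) ->
  (forall t, f z <= f (t *: v + z) + (al * t + be * t ^+ 2)) ->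
  dL f z v + al = 0.
Proof. by rewrite dLE; exact: fermat_line. Qed.

Lemma conv_gradL (f : V -> R) (x y : V) : jointly_convex f ->
  differentiable f x -> f x + dL f x (y - x) <= f y.
Proof. by rewrite dLE; exact: conv_grad. Qed.

Lemma lip_hL (f : V -> R) Cc (z1 z2 : V) : grad_lipschitz f Cc ->
  Num.sqrt (sqn (ghL f z1 - ghL f z2)) <= Cc * norm2 (z1 - z2).
Proof. by rewrite ghLE; exact: lip_h. Qed.

End A.

Section B2.
Local Open Scope classical_set_scope.
Local Open Scope ring_scope.
Context {R : realType} {n : nat}.
Local Notation V := ('cV[R]_n * 'cV[R]_n)%type.
Implicit Types x y z : 'cV[R]_n.
Lemma dir_lip (f : V -> R) Cc (z1 z2 : V) d : grad_lipschitz f Cc ->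
  dotv (grad_h f z1 - grad_h f z2) d <= Cc * norm2 (z1 - z2) * Num.sqrt (sqn d).
Proof.
move=> lip; apply: le_trans (CS _ _) _.
have H := lip_h _ _ z1 z2 lip.
by apply: ler_pM => //; exact: sqrtr_ge0.
Qed.

Lemma norm2_line c (d : 'cV[R]_n) : 0 <= c -> norm2 ((c *: (0, d) : V)) = c * Num.sqrt (sqn d).
Proof.
move=> c0; change (norm2 ((c *: 0, c *: d) : V) = c * Num.sqrt (sqn d)).
rewrite scaler0 /norm2 /sqn dotv0l add0r -/(sqn _) sqnZ.
by rewrite sqrtrM ?sqr_ge0 // sqrtr_sqr ger0_norm.
Qed.

Lemma dir_lipL (f : V -> R) Cc (z1 z2 : V) d : grad_lipschitz f Cc ->
  dotv (ghL f z1 - ghL f z2) d <= Cc * norm2 (z1 - z2) * Num.sqrt (sqn d).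
Proof.
move=> lip; apply: le_trans (CS _ _) _.
have H := lip_hL _ _ z1 z2 lip.
by apply: ler_pM => //; exact: sqrtr_ge0.
Qed.

Lemma dlip (f : V -> R) Cc (z1 z2 v : V) : grad_lipschitz f Cc -> v.1 = 0 ->
  dL f z1 v - dL f z2 v <= Cc * norm2 (z1 - z2) * Num.sqrt (sqn v.2).
Proof.
move=> lip v1.
have G1 := grad_decL f z1 v.
have G2 := grad_decL f z2 v.
have E1 : dotv (gcL f z1) v.1 = 0 by rewrite v1 dotv0r.
have E2 : dotv (gcL f z2) v.1 = 0 by rewrite v1 dotv0r.
have E3 := dotvBl (ghL f z1) (ghL f z2) v.2.
have L := dir_lipL f Cc z1 z2 v.2 lip.
lra.
Qed.


Lemma descent (f : V -> R) (x : V) (d : 'cV[R]_n) Cc :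
  (forall w : V, differentiable f w) -> grad_lipschitz f Cc ->
  f ((0, d) + x) <= f x + dL f x (0, d) + Cc / 2 * sqn d.
Proof.
move=> df lip.
pose v : V := (0, d).
pose K := dL f x v; pose B := Cc / 2 * sqn d.
pose phi := fun s : R => f (s *: v + x) + (0 + (- K) * s + (- B) * s ^+ 2).
have D := fun t => line_poly_deriveL f x v 0 (- K) (- B) t df.
have Dc : forall t : R, t \in `]0, 1[ -> is_derive t (1:R) phi
    (dL f (t *: v + x) v + (- K + (- B) * (2 * t))).
  by move=> t _; exact: D.
have Cphi : {within `[0, 1], continuous phi}.
  apply: derivable_within_continuous => t _.
  exact: (@ex_derive _ _ _ _ _ _ _ (D t)).
have [c c01 Hc] := MVT ltr01 Dc Cphi.
have c0 : 0 < c.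
  by move: c01; rewrite in_itv => /andP[].
have key := dlip f Cc (c *: v + x) x v lip (erefl (0 : 'cV[R]_n)).
have N : norm2 ((c *: v + x) - x) = c * Num.sqrt (sqn d).
  by rewrite addrK norm2_line // ltW.
have Q : Cc * (c * Num.sqrt (sqn d)) * Num.sqrt (sqn d) = Cc * c * sqn d.
  by rewrite -[in RHS](sqr_sqrtr (sqn_ge0 d)); ring.
have P1 : phi 1 = f (v + x) - K - B by rewrite /phi scale1r; ring.
have P0 : phi 0 = f x by rewrite /phi scale0r add0r; ring.
rewrite N Q in key.
rewrite P1 P0 in Hc.
have EB : B * (2 * c) = Cc * c * sqn d by rewrite /B; field.
rewrite /K /B in Hc EB *.
lra.
Qed.


Lemma sqn1_diff (z : V) : differentiable (fun w : V => sqn w.1) z.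
Proof.
have -> : (fun w : V => sqn w.1) =
    \sum_(j < n) ((fun w : V => w.1 j 0) * (fun w : V => w.1 j 0)).
  by apply/funext => w; rewrite fct_sumE /sqn dotvE.
apply: differentiable_sum => j; apply: differentiableM;
  exact: (differentiable_comp (fst_diff z) (differentiable_coord _ j 0)).
Qed.

Lemma sqn2_diff (z : V) : differentiable (fun w : V => sqn w.2) z.
Proof.
have -> : (fun w : V => sqn w.2) =
    \sum_(j < n) ((fun w : V => w.2 j 0) * (fun w : V => w.2 j 0)).
  by apply/funext => w; rewrite fct_sumE /sqn dotvE.
apply: differentiable_sum => j; apply: differentiableM;
  exact: (differentiable_comp (snd_diff z) (differentiable_coord _ j 0)).
Qed.


Lemma dFi (f : V -> R) mu1 mu2 (z v : V) : differentiable f z ->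
  dL (Fi f mu1 mu2) z v = dL f z v + mu1 * dotv z.1 v.1 + mu2 * dotv z.2 v.2.
Proof.
move=> dfz.
pose g := fun w : V => mu1 / 2 * sqn w.1 + mu2 / 2 * sqn w.2.
have dg : forall w, differentiable g w.
  move=> w; have -> : g = (mu1 / 2) \*: (fun w : V => sqn w.1) + (mu2 / 2) \*: (fun w : V => sqn w.2) by [].
  apply: differentiableD; apply: differentiableZ; [exact: sqn1_diff | exact: sqn2_diff].
have -> : Fi f mu1 mu2 = f + g by apply/funext => w; rewrite /Fi /g /= addrA.
rewrite !dLE diffD //.
rewrite -/(('d f z : V -> R) v + 'd g z v) -addrA; congr (_ + _).
have L1 := line_derive g z v 0.
rewrite scale0r add0r in L1; have {}L1 := L1 (dg z).
pose A := mu1 * dotv z.1 v.1 + mu2 * dotv z.2 v.2.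
pose Bq := mu1 / 2 * sqn v.1 + mu2 / 2 * sqn v.2.
have L2 : is_derive (0:R) (1:R) (fun s : R => g (s *: v + z)) (A + Bq * (2 * 0)).
  rewrite (_ : (fun s : R => g (s *: v + z)) = (fun s => g z + A * s + Bq * s ^+ 2)).
    exact: poly_derive.
  apply/funext => s; rewrite /g /A /Bq.
  rewrite (_ : (s *: v + z).1 = s *: v.1 + z.1) // (_ : (s *: v + z).2 = s *: v.2 + z.2) //.
  by rewrite !sqnD !sqnZ !dotvZl (dotvC v.1) (dotvC v.2); field; rewrite ?pnatr_eq0.
have := @derive_val _ _ _ _ _ _ _ L1.
rewrite (@derive_val _ _ _ _ _ _ _ L2) => <-.
by rewrite /A mulr0 mulr0 addr0.
Qed.

Lemma dotv_gcFi (f : V -> R) mu1 mu2 (z : V) a : differentiable f z ->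
  dotv (gcL (Fi f mu1 mu2) z) a = dotv (gcL f z) a + mu1 * dotv z.1 a.
Proof.
move=> dfz.
have H1 := grad_decL (Fi f mu1 mu2) z (a, 0).
have H2 := grad_decL f z (a, 0).
have H3 := dFi f mu1 mu2 z (a, 0) dfz.
rewrite /= dotv0r addr0 in H1; rewrite /= dotv0r addr0 in H2.
rewrite /= dotv0r mulr0 addr0 in H3.
lra.
Qed.

Lemma dotv_ghFi (f : V -> R) mu1 mu2 (z : V) b : differentiable f z ->
  dotv (ghL (Fi f mu1 mu2) z) b = dotv (ghL f z) b + mu2 * dotv z.2 b.
Proof.
move=> dfz.
have H1 := grad_decL (Fi f mu1 mu2) z (0, b).
have H2 := grad_decL f z (0, b).
have H3 := dFi f mu1 mu2 z (0, b) dfz.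
rewrite /= dotv0r add0r in H1; rewrite /= dotv0r add0r in H2.
rewrite /= dotv0r mulr0 addr0 in H3.
lra.
Qed.

End B2.

Section C4.
Local Open Scope classical_set_scope.
Local Open Scope ring_scope.
Context {R : realType} {n : nat}.
Local Notation V := ('cV[R]_n * 'cV[R]_n)%type.
Implicit Types x y z : 'cV[R]_n.

Lemma node_ineq (f : V -> R) Cc mu1 mu2 m x y y' xs ys T1 T2 K1 :
  (forall w : V, differentiable f w) -> jointly_convex f ->
  grad_lipschitz f Cc -> 0 <= mu1 -> 0 < m -> m <= mu2 ->
  dL f (x, y') (x - xs, 0) + mu1 * dotv x (x - xs) + T1 = 0 ->
  dL f (x, y) (0, y - ys) + mu2 * dotv y (y - ys) + T2 = 0 ->
  dotv (gcL f (xs, ys)) (x - xs) + mu1 * dotv xs (x - xs) = K1 ->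
  dotv (ghL f (xs, ys)) (y - ys) + mu2 * dotv ys (y - ys) = 0 ->
  K1 + T1 + T2 <= (Cc / 2 + Cc ^+ 2 / (4 * m)) * sqn (y - y').
Proof.
move=> df cf lip mu1p mp mmu H1 H2 K1E K2E.
have c1 := conv_gradL f (xs, ys) (x, y) cf (df _).
rewrite (_ : ((x, y) - (xs, ys) : V) = (x - xs, y - ys)) // in c1.
have c2 := conv_gradL f (x, y') (xs, ys) cf (df _).
rewrite (_ : ((xs, ys) - (x, y') : V) = (xs - x, ys - y')) // in c2.
have c3 := descent f (x, y') (y - y') Cc df lip.
rewrite (_ : ((0, y - y') + (x, y') : V) = (x, y)) in c3; last first.
  by rewrite -[LHS]/((0 + x, y - y' + y')) add0r subrK.
have G1 := grad_decL f (xs, ys) (x - xs, y - ys).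
have G2 := grad_decL f (x, y') (xs - x, ys - y').
have G3 := grad_decL f (x, y') (0, y - y').
have G4 := grad_decL f (x, y') (x - xs, 0).
have G5 := grad_decL f (x, y) (0, y - ys).
rewrite /fst /snd in G1 G2 G3 G4 G5.
rewrite dotv0r in G3; rewrite dotv0r in G4; rewrite dotv0r in G5.
have E1 : dotv (gcL f (x, y')) (xs - x) = - dotv (gcL f (x, y')) (x - xs).
  by rewrite -dotvNr opprB.
have E2 : dotv (ghL f (x, y')) (ys - y') =
    dotv (ghL f (x, y')) (y - y') - dotv (ghL f (x, y')) (y - ys).
  rewrite -dotvBr; congr dotv.
  by apply/matrixP => i j; rewrite !mxE; ring.
have E3 : mu1 * dotv x (x - xs) - mu1 * dotv xs (x - xs) = mu1 * sqn (x - xs).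
  by rewrite -mulrBr -dotvBl.
have E4 : mu2 * dotv y (y - ys) - mu2 * dotv ys (y - ys) = mu2 * sqn (y - ys).
  by rewrite -mulrBr -dotvBl.
pose dl := ghL f (x, y) - ghL f (x, y').
have E5 : dotv dl (y - ys) = dotv (ghL f (x, y)) (y - ys) - dotv (ghL f (x, y')) (y - ys).
  by rewrite dotvBl.
have mu2p : 0 < mu2 by apply: lt_le_trans mmu.
have Qb : 0 <= mu2 * sqn (y - ys) + dotv dl (y - ys) + sqn dl / (4 * mu2).
  have := sqn_ge0 ((y - ys) + (1 / (2 * mu2)) *: dl).
  rewrite sqnD sqnZ dotvZr => H.
  have -> : mu2 * sqn (y - ys) + dotv dl (y - ys) + sqn dl / (4 * mu2) =
     mu2 * (sqn (y - ys) + 2 * (1 / (2 * mu2) * dotv (y - ys) dl) + (1 / (2 * mu2)) ^+ 2 * sqn dl).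
    by rewrite (dotvC dl); field; rewrite gt_eqF.
  by rewrite mulr_ge0 // ltW.
have Sd : sqn dl <= Cc ^+ 2 * sqn (y - y').
  have := lip_hL f Cc (x, y) (x, y') lip.
  rewrite (_ : ((x, y) - (x, y') : V) = (x - x, y - y')) // /norm2 /fst /snd.
  rewrite subrr /sqn dotv0l add0r -/(sqn _) -/dl => H.
  have H0 : 0 <= Num.sqrt (sqn dl) by exact: sqrtr_ge0.
  have := ler_pM H0 H0 H H.
  rewrite -expr2 sqr_sqrtr ?sqn_ge0 // => H'.
  apply: (le_trans H').
  rewrite (_ : Cc * Num.sqrt (sqn (y - y')) * (Cc * Num.sqrt (sqn (y - y'))) =
    Cc ^+ 2 * (Num.sqrt (sqn (y - y')) ^+ 2)); last by ring.
  by rewrite sqr_sqrtr ?sqn_ge0.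
have Sd2 : sqn dl / (4 * mu2) <= Cc ^+ 2 * sqn (y - y') / (4 * m).
  apply: le_trans (_ : sqn dl / (4 * m) <= _).
    apply: ler_wpM2l; first exact: sqn_ge0.
    by rewrite lef_pV2 ?posrE ?mulr_gt0 // ler_pM2l.
  by apply: ler_wpM2r => //; rewrite invr_ge0 mulr_ge0 // ltW.
have A1 : 0 <= mu1 * sqn (x - xs) by rewrite mulr_ge0 // sqn_ge0.
have RH : (Cc / 2 + Cc ^+ 2 / (4 * m)) * sqn (y - y') = Cc / 2 * sqn (y - y') + Cc ^+ 2 * sqn (y - y') / (4 * m).
  by ring.
rewrite RH.
lra.
Qed.
End C4.

Section E5.
Local Open Scope classical_set_scope.
Local Open Scope ring_scope.
Context {R : realType} {N n : nat} (adj : rel 'I_N).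
Local Notation Ev := (edge adj -> 'cV[R]_n).
Implicit Types (l m : Ev) (u v : 'cV[R]_n).

Lemma dotEC l m : dotE l m = dotE m l.
Proof. by apply: eq_bigr => e _; rewrite dotvC. Qed.

Lemma dotEDl l1 l2 m : dotE (fun e => l1 e + l2 e) m = dotE l1 m + dotE l2 m.
Proof. by rewrite /dotE -big_split; apply: eq_bigr => e _; rewrite dotvDl. Qed.

Lemma dotEDr l1 l2 m : dotE m (fun e => l1 e + l2 e) = dotE m l1 + dotE m l2.
Proof. by rewrite dotEC dotEDl !(dotEC m). Qed.

Lemma dotEZl c l m : dotE (fun e => c *: l e) m = c * dotE l m.
Proof. by rewrite /dotE mulr_sumr; apply: eq_bigr => e _; rewrite dotvZl. Qed.

Lemma dotEZr c l m : dotE m (fun e => c *: l e) = c * dotE m l.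
Proof. by rewrite dotEC dotEZl dotEC. Qed.

Lemma dotENl l m : dotE (fun e => - l e) m = - dotE l m.
Proof.
rewrite -mulN1r -dotEZl; congr dotE; apply/funext => e.
by rewrite scaleN1r.
Qed.

Lemma dotENr l m : dotE m (fun e => - l e) = - dotE m l.
Proof. by rewrite dotEC dotENl dotEC. Qed.

Lemma dotEBl l1 l2 m : dotE (fun e => l1 e - l2 e) m = dotE l1 m - dotE l2 m.
Proof. by rewrite dotEDl dotENl. Qed.

Lemma dotEBr l1 l2 m : dotE m (fun e => l1 e - l2 e) = dotE m l1 - dotE m l2.
Proof. by rewrite dotEDr dotENr. Qed.

Lemma dotE_sumr (F : 'I_N -> Ev) m :
  dotE m (fun e => \sum_i F i e) = \sum_i dotE m (F i).
Proof.
rewrite /dotE exchange_big /=; apply: eq_bigr => e _.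
by rewrite (big_morph _ (fun a b => dotvDr a b (m e)) (dotv0r (m e))).
Qed.

Lemma dotv_sumr (I : finType) (F : I -> 'cV[R]_n) u :
  dotv u (\sum_i F i) = \sum_i dotv u (F i).
Proof. by rewrite (big_morph _ (fun a b => dotvDr a b u) (dotv0r u)). Qed.

Lemma adjoint i u l : dotv u (AcolT adj i l) = dotE (Acol adj i u) l.
Proof.
rewrite /AcolT dotv_sumr /dotE; apply: eq_bigr => e _.
by rewrite /Acol dotvZr dotvZl.
Qed.

Lemma AcolD i u v : Acol adj i (u + v) = (fun e => Acol adj i u e + Acol adj i v e).
Proof. by apply/funext => e; rewrite /Acol scalerDr. Qed.

Lemma AcolZ i c u : Acol adj i (c *: u) = (fun e => c *: Acol adj i u e).
Proof. by apply/funext => e; rewrite /Acol !scalerA mulrC. Qed.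

Lemma AcolB i u v : Acol adj i (u - v) = (fun e => Acol adj i u e - Acol adj i v e).
Proof. by apply/funext => e; rewrite /Acol scalerBr. Qed.

Lemma Aop_upd (W : 'I_N -> 'cV[R]_n) i w :
  Aop adj (upd W i w) = (fun e => Aop adj W e + Acol adj i (w - W i) e).
Proof.
apply/funext => e; rewrite /Aop (bigD1 i) //= [in RHS](bigD1 i) //= /upd eqxx.
rewrite (eq_bigr (fun j => Acol adj j (W j) e)); last by move=> j /negbTE ->.
rewrite [RHS]addrAC; congr (_ + _).
by rewrite AcolB addrC subrK.
Qed.

Lemma AopB (W1 W2 : 'I_N -> 'cV[R]_n) :
  Aop adj (fun i => W1 i - W2 i) = (fun e => Aop adj W1 e - Aop adj W2 e).
Proof.
apply/funext => e; rewrite /Aop -sumrB; apply: eq_bigr => j _.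
by rewrite AcolB.
Qed.

Lemma dotE_Aop l (W : 'I_N -> 'cV[R]_n) :
  dotE l (Aop adj W) = \sum_i dotE l (Acol adj i (W i)).
Proof. by rewrite /Aop dotE_sumr. Qed.

End E5.

Section Mx.
Context {R : realType} {n : nat}.
Implicit Types (u v : 'cV[R]_n) (S : 'M[R]_n).

Lemma dotv_sym S u v : S^T = S -> dotv u (S *m v) = dotv v (S *m u).
Proof.
move=> St; have E : forall M : 'M[R]_1, M 0 0 = M^T 0 0 by move=> M; rewrite mxE.
by rewrite /dotv {1}E !trmx_mul trmxK St mulmxA.
Qed.

Lemma qformE S u : qform S u = dotv u (S *m u).
Proof. by rewrite /qform /dotv mulmxA. Qed.

Lemma dotv_mulD S u v w : dotv (S *m (u + v)) w = dotv (S *m u) w + dotv (S *m v) w.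
Proof. by rewrite mulmxDr dotvDl. Qed.

Lemma qformD S u v : S^T = S ->
  qform S (u + v) = qform S u + 2 * dotv (S *m u) v + qform S v.
Proof.
move=> St; rewrite !qformE mulmxDr !dotvDl !dotvDr.
rewrite (dotv_sym S u v St) (dotvC v (S *m u)).
ring.
Qed.

Lemma qformZ S c u : qform S (c *: u) = c ^+ 2 * qform S u.
Proof. by rewrite !qformE -scalemxAr dotvZl dotvZr mulrA expr2. Qed.

Lemma qformN S u : qform S (- u) = qform S u.
Proof. by rewrite -scaleN1r qformZ sqrrN expr1n mul1r. Qed.

Lemma qform_shift S c u : qform (S - c *: 1%:M) u = qform S u - c * sqn u.
Proof.
rewrite !qformE mulmxBl -scalemxAl mul1mx dotvBr dotvZr.
by [].
Qed.

End Mx.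

Section F6.
Local Open Scope classical_set_scope.
Local Open Scope ring_scope.
Context {R : realType} {N n : nat} (adj : rel 'I_N).
Local Notation Ev := (edge adj -> 'cV[R]_n).
Local Notation V := ('cV[R]_n * 'cV[R]_n)%type.

Lemma qG1E rho (P : 'I_N -> 'M[R]_n) i (x : 'cV[R]_n) :
  qG1 adj rho P i x = rho * dotE (Acol adj i x) (Acol adj i x) + qform (P i) x.
Proof. by rewrite /qG1 dotvDr dotvZr adjoint qformE. Qed.

Lemma Lrho_upd (f : 'I_N -> V -> R) mu1 mu2 rho (W Wh : 'I_N -> 'cV[R]_n) lam i w :
  Lrho adj f mu1 mu2 rho (upd W i w) Wh lam =
  Fi (f i) mu1 mu2 (w, Wh i) + \sum_(j < N | j != i) Fi (f j) mu1 mu2 (W j, Wh j)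
  - dotE lam (Aop adj (upd W i w)) + rho / 2 * sqnE (Aop adj (upd W i w)).
Proof.
rewrite /Lrho (bigD1 i) //= {1}/upd eqxx.
rewrite (eq_bigr (fun j => Fi (f j) mu1 mu2 (W j, Wh j))) //.
by move=> j /negbTE Hj; rewrite /upd Hj.
Qed.

Lemma Aop_upd_line (W : 'I_N -> 'cV[R]_n) i (a x : 'cV[R]_n) t :
  Aop adj (upd W i (t *: a + x)) = (fun e => Aop adj (upd W i x) e + t *: Acol adj i a e).
Proof.
rewrite !Aop_upd; apply/funext => e; rewrite /Acol.
by apply/matrixP => p q; rewrite !mxE; ring.
Qed.

Lemma sqnE_line (U c : Ev) t :
  sqnE (fun e => U e + t *: c e) = sqnE U + 2 * t * dotE U c + t ^+ 2 * sqnE c.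
Proof.
rewrite /sqnE dotEDl !dotEDr !dotEZl !dotEZr (dotEC _ c U); ring.
Qed.

Lemma dotE_line (lam U c : Ev) t :
  dotE lam (fun e => U e + t *: c e) = dotE lam U + t * dotE lam c.
Proof. by rewrite dotEDr dotEZr. Qed.


Lemma FiE (g : V -> R) mu1 mu2 (a b : 'cV[R]_n) :
  Fi g mu1 mu2 (a, b) = g (a, b) + mu1 / 2 * sqn a + mu2 / 2 * sqn b.
Proof. by []. Qed.

Lemma step1_fermat (f : 'I_N -> V -> R) mu1 mu2 rho (P : 'I_N -> 'M[R]_n)
  (W Wh : 'I_N -> 'cV[R]_n) (lam : Ev) i (x xs : 'cV[R]_n) :
  (forall w : V, differentiable (f i) w) -> (P i)^T = P i ->
  (forall w, Lrho adj f mu1 mu2 rho (upd W i x) Wh lam + 1/2 * qform (P i) (x - W i)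
     <= Lrho adj f mu1 mu2 rho (upd W i w) Wh lam + 1/2 * qform (P i) (w - W i)) ->
  dL (f i) (x, Wh i) (x - xs, 0) + mu1 * dotv x (x - xs) +
    (- dotE lam (Acol adj i (x - xs)) + rho * dotE (Aop adj (upd W i x)) (Acol adj i (x - xs))
     + dotv (P i *m (x - W i)) (x - xs)) = 0.
Proof.
move=> df Ps S1.
rewrite -addrA.
apply: (fermat_lineL (f i) (x, Wh i) (x - xs, 0) _
   (mu1 / 2 * sqn (x - xs) + rho / 2 * sqnE (Acol adj i (x - xs)) + 1/2 * qform (P i) (x - xs)) df).
move=> t.
have := S1 (t *: (x - xs) + x).
rewrite (_ : (t *: ((x - xs, 0) : V) + (x, Wh i) : V) = (t *: (x - xs) + x, Wh i)); last first.
  by rewrite -[LHS]/((t *: (x - xs) + x, t *: 0 + Wh i)) scaler0 add0r.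
rewrite !Lrho_upd Aop_upd_line sqnE_line dotE_line.
rewrite (_ : t *: (x - xs) + x - W i = (x - W i) + t *: (x - xs)); last first.
  by apply/matrixP => p q; rewrite !mxE; ring.
rewrite (qformD (P i) (x - W i) (t *: (x - xs)) Ps) qformZ !FiE (sqnD (t *: (x - xs)) x) sqnZ dotvZl.
rewrite dotvZr (dotvC (x - xs) x).
move=> H.
lra.
Qed.

Lemma step3_fermat (g : V -> R) mu1 mu2 (Qi : 'M[R]_n) (x y y' ys : 'cV[R]_n) :
  (forall w : V, differentiable g w) -> Qi^T = Qi ->
  (forall w, Fi g mu1 mu2 (x, y) + 1/2 * qform Qi (y - y')
     <= Fi g mu1 mu2 (x, w) + 1/2 * qform Qi (w - y')) ->
  dL g (x, y) (0, y - ys) + mu2 * dotv y (y - ys) + dotv (Qi *m (y - y')) (y - ys) = 0.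
Proof.
move=> df Qs S3.
rewrite -addrA.
apply: (fermat_lineL g (x, y) (0, y - ys) _
   (mu2 / 2 * sqn (y - ys) + 1/2 * qform Qi (y - ys)) df).
move=> t.
have := S3 (t *: (y - ys) + y).
rewrite (_ : (t *: ((0, y - ys) : V) + (x, y) : V) = (x, t *: (y - ys) + y)); last first.
  by rewrite -[LHS]/((t *: 0 + x, t *: (y - ys) + y)) scaler0 add0r.
rewrite (_ : t *: (y - ys) + y - y' = (y - y') + t *: (y - ys)); last first.
  by apply/matrixP => p q; rewrite !mxE; ring.
rewrite (qformD Qi (y - y') (t *: (y - ys)) Qs) qformZ !FiE (sqnD (t *: (y - ys)) y) sqnZ dotvZl.
rewrite dotvZr (dotvC (y - ys) y).
move=> H.
lra.
Qed.

Lemma qG1_sub rho (P : 'I_N -> 'M[R]_n) i (u v : 'cV[R]_n) : (P i)^T = P i ->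
  qG1 adj rho P i (u - v) = qG1 adj rho P i u
    - 2 * (rho * dotE (Acol adj i v) (Acol adj i u) + dotv (P i *m v) u) + qG1 adj rho P i v.
Proof.
move=> Ps; rewrite !qG1E AcolB dotEBl !dotEBr (qformD (P i) u (- v) Ps) qformN.
rewrite dotvNr (dotvC (P i *m u) v) (dotv_sym (P i) v u Ps) (dotvC u (P i *m v)) (dotEC _ (Acol adj i u) (Acol adj i v)).
ring.
Qed.

Lemma qG1N rho (P : 'I_N -> 'M[R]_n) i (u : 'cV[R]_n) :
  qG1 adj rho P i (- u) = qG1 adj rho P i u.
Proof.
rewrite !qG1E qformN; congr (_ * _ + _).
rewrite -scaleN1r AcolZ dotEZl dotEZr; ring.
Qed.

Lemma qform_sub (S : 'M[R]_n) (u v : 'cV[R]_n) : S^T = S ->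
  qform S (u - v) = qform S u - 2 * dotv (S *m v) u + qform S v.
Proof.
move=> Ss; rewrite (qformD S u (- v) Ss) qformN dotvNr (dotvC (S *m u) v) (dotv_sym S v u Ss).
by rewrite (dotvC u); ring.
Qed.

Lemma sqnE_subZ (l1 l2 : Ev) c :
  sqnE (fun e => l1 e - c *: l2 e) = sqnE l1 - 2 * c * dotE l1 l2 + c ^+ 2 * sqnE l2.
Proof.
rewrite /sqnE dotEBl !dotEBr !dotEZl !dotEZr (dotEC _ l2 l1); ring.
Qed.

Lemma sqnEZ (l1 : Ev) c : sqnE (fun e => c *: l1 e) = c ^+ 2 * sqnE l1.
Proof. by rewrite /sqnE dotEZl dotEZr; ring. Qed.

End F6.

Theorem lemma2 (R : realType) (N n : nat) (adj : rel 'I_N)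
  (f : 'I_N -> 'cV[R]_n * 'cV[R]_n -> R) (C : 'I_N -> R)
  (mu1 mu2 m rho gamma : R) (P Q : 'I_N -> 'M[R]_n)
  (Wc Wh : nat -> 'I_N -> 'cV[R]_n) (l : nat -> edge adj -> 'cV[R]_n)
  (Wcs Whs : 'I_N -> 'cV[R]_n) (ls : edge adj -> 'cV[R]_n) :
  (2 <= N)%N ->
  simple_connected_graph adj ->
  (forall i z, differentiable (f i) z) ->
  (forall i, jointly_convex (f i)) ->
  (forall i, grad_lipschitz (f i) (C i)) ->
  0 <= mu1 -> 0 < mu2 -> 0 < m -> m <= mu2 ->
  0 < rho -> 0 < gamma ->
  (forall i, psd_sym (P i)) -> (forall i, psd_sym (Q i)) ->
  algo_seq adj f mu1 mu2 rho gamma P Q Wc Wh l ->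
  KKT adj f mu1 mu2 Wcs Whs ls ->
  forall k : nat, (1 <= k)%N ->
    normG adj rho gamma P Q (fun i => Wc k i - Wcs i) (fun i => Wh k i - Whs i)
      (fun e => l k e - ls e)
    - normG adj rho gamma P Q (fun i => Wc k.+1 i - Wcs i)
        (fun i => Wh k.+1 i - Whs i) (fun e => l k.+1 e - ls e)
    >= normM adj rho gamma m C P Q (fun i => Wc k i - Wc k.+1 i)
         (fun i => Wh k i - Wh k.+1 i) (fun e => l k e - l k.+1 e).
Proof.
move=> _ _ df cf lip mu1p mu2p mp mmu rhop gp Psd Qsd alg kkt k _.
have [S1 S2 S3] := alg k.
have [KA KC KH] := kkt.
have Ps : forall i, (P i)^T = P i by move=> i; case: (Psd i).
have Qs : forall i, (Q i)^T = Q i by move=> i; case: (Qsd i).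
have NI : forall i,
  dotE ls (Acol adj i (Wc k.+1 i - Wcs i)) +
  (- dotE (l k) (Acol adj i (Wc k.+1 i - Wcs i))
   + rho * dotE (Aop adj (upd (Wc k) i (Wc k.+1 i))) (Acol adj i (Wc k.+1 i - Wcs i))
   + dotv (P i *m (Wc k.+1 i - Wc k i)) (Wc k.+1 i - Wcs i))
  + dotv (Q i *m (Wh k.+1 i - Wh k i)) (Wh k.+1 i - Whs i)
  <= (C i / 2 + C i ^+ 2 / (4 * m)) * sqn (Wh k.+1 i - Wh k i).
  move=> i.
  apply: (node_ineq (f i) (C i) mu1 mu2 m (Wc k.+1 i) (Wh k.+1 i) (Wh k i) (Wcs i) (Whs i))
    => //.
  - exact: step1_fermat (df i) (Ps i) (S1 i).
  - exact: step3_fermat (df i) (Qs i) (S3 i).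
  - have := dotv_gcFi (f i) mu1 mu2 (Wcs i, Whs i) (Wc k.+1 i - Wcs i) (df i _).
    rewrite gcLE -KC dotvC adjoint dotEC => <-.
    by [].
  - have := dotv_ghFi (f i) mu1 mu2 (Wcs i, Whs i) (Wh k.+1 i - Whs i) (df i _).
    rewrite ghLE KH dotv0l => H.
    by rewrite -H.
have NI2 : forall i,
  dotE ls (Acol adj i (Wc k.+1 i - Wcs i)) - dotE (l k) (Acol adj i (Wc k.+1 i - Wcs i))
  + rho * dotE (Aop adj (Wc k)) (Acol adj i (Wc k.+1 i - Wcs i))
  + (rho * dotE (Acol adj i (Wc k.+1 i - Wc k i)) (Acol adj i (Wc k.+1 i - Wcs i))
     + dotv (P i *m (Wc k.+1 i - Wc k i)) (Wc k.+1 i - Wcs i))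
  + dotv (Q i *m (Wh k.+1 i - Wh k i)) (Wh k.+1 i - Whs i)
  <= (C i / 2 + C i ^+ 2 / (4 * m)) * sqn (Wh k.+1 i - Wh k i).
  move=> i; have := NI i.
  rewrite Aop_upd dotEDl; lra.
have SN := ler_sum (index_enum 'I_N) (P := xpredT) (fun i _ => NI2 i).
rewrite !big_split /= sumrN -!mulr_sumr in SN.
rewrite -(dotE_Aop _ ls (fun i => Wc k.+1 i - Wcs i)) in SN.
rewrite -(dotE_Aop _ (l k) (fun i => Wc k.+1 i - Wcs i)) in SN.
rewrite -(dotE_Aop _ (Aop adj (Wc k)) (fun i => Wc k.+1 i - Wcs i)) in SN.
have AU : Aop adj (fun i => Wc k.+1 i - Wcs i) = Aop adj (Wc k.+1).
  by rewrite AopB KA; apply/funext => e; rewrite subr0.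
rewrite AU in SN.
pose U := Aop adj (Wc k.+1).
pose AE := Aop adj (fun i => Wc k.+1 i - Wc k i).
have AW : dotE (Aop adj (Wc k)) (Aop adj (Wc k.+1)) =
    sqnE (Aop adj (Wc k.+1)) - dotE (Aop adj (fun i => Wc k.+1 i - Wc k i)) (Aop adj (Wc k.+1)).
  by rewrite AopB dotEBl /sqnE; ring.
rewrite AW in SN.
have G0a : \sum_(i < N) qG1 adj rho P i (Wc k i - Wcs i) =
   \sum_(i < N) qG1 adj rho P i (Wc k.+1 i - Wcs i)
   - 2 * (rho * \sum_(i < N) dotE (Acol adj i (Wc k.+1 i - Wc k i)) (Acol adj i (Wc k.+1 i - Wcs i))
          + \sum_(i < N) dotv (P i *m (Wc k.+1 i - Wc k i)) (Wc k.+1 i - Wcs i))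
   + \sum_(i < N) qG1 adj rho P i (Wc k.+1 i - Wc k i).
  rewrite mulr_sumr -big_split mulr_sumr -sumrN -!big_split /=.
  apply: eq_bigr => i _.
  rewrite -qG1_sub //; congr qG1.
  by apply/matrixP => p q; rewrite !mxE; ring.
have G0b : \sum_(i < N) qform (Q i) (Wh k i - Whs i) =
   \sum_(i < N) qform (Q i) (Wh k.+1 i - Whs i)
   - 2 * \sum_(i < N) dotv (Q i *m (Wh k.+1 i - Wh k i)) (Wh k.+1 i - Whs i)
   + \sum_(i < N) qform (Q i) (Wh k.+1 i - Wh k i).
  rewrite mulr_sumr -sumrN -!big_split /=.
  apply: eq_bigr => i _.
  rewrite -qform_sub //; congr qform.
  by apply/matrixP => p q; rewrite !mxE; ring.
have L1 : (fun e => l k.+1 e - ls e) =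
    (fun e => (l k e - ls e) - (gamma * rho) *: Aop adj (Wc k.+1) e).
  by rewrite S2; apply/funext => e; rewrite addrAC.
have L2 : (fun e => l k e - l k.+1 e) = (fun e => (gamma * rho) *: Aop adj (Wc k.+1) e).
  by rewrite S2; apply/funext => e; rewrite opprB addrC subrK.
have L3 : Aop adj (fun i => Wc k i - Wc k.+1 i) =
    (fun e => - Aop adj (fun i => Wc k.+1 i - Wc k i) e).
  by rewrite !AopB; apply/funext => e; rewrite opprB.
have M1 : \sum_(i < N) qG1 adj rho P i (Wc k i - Wc k.+1 i) =
    \sum_(i < N) qG1 adj rho P i (Wc k.+1 i - Wc k i).
  by apply: eq_bigr => i _; rewrite -opprB qG1N.
have M2 : \sum_(i < N) qform (Q i - (C i / m * (C i + m)) *: 1%:M) (Wh k i - Wh k.+1 i) =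
    \sum_(i < N) qform (Q i) (Wh k.+1 i - Wh k i)
    - \sum_(i < N) C i / m * (C i + m) * sqn (Wh k.+1 i - Wh k i).
  rewrite -sumrB; apply: eq_bigr => i _.
  rewrite qform_shift -(opprB (Wh k.+1 i) (Wh k i)) qformN.
  by rewrite /sqn dotvNl dotvNr opprK.
rewrite /normG /normM G0a G0b M1 M2 L1 L2 L3 sqnE_subZ sqnEZ dotEZl dotENr.
set X := sqnE (fun e => l k e - ls e).
set Y := dotE (fun e => l k e - ls e) (Aop adj (Wc k.+1)).
set Z := sqnE (Aop adj (Wc k.+1)).
set W := dotE (Aop adj (Wc k.+1)) (Aop adj (fun i => Wc k.+1 i - Wc k i)).
have gr0 : gamma * rho != 0 by rewrite mulf_neq0 // gt_eqF.
have F1 : 1 / (gamma * rho) * (X - 2 * (gamma * rho) * Y + (gamma * rho) ^+ 2 * Z) =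
    1 / (gamma * rho) * X - 2 * Y + gamma * rho * Z.
  by field; rewrite !gt_eqF.
have F2 : (2 - gamma) / (gamma ^+ 2 * rho) * ((gamma * rho) ^+ 2 * Z) = (2 - gamma) * rho * Z.
  by field; rewrite !gt_eqF.
have F3 : 2 / gamma * (gamma * rho * - W) = - (2 * rho * W).
  by field; rewrite gt_eqF.
rewrite F1 F2 F3.
have EY : Y = dotE (l k) (Aop adj (Wc k.+1)) - dotE ls (Aop adj (Wc k.+1)) by rewrite /Y dotEBl.
have EW : W = dotE (Aop adj (fun i => Wc k.+1 i - Wc k i)) (Aop adj (Wc k.+1)) by rewrite /W dotEC.
have Sg : 2 * \sum_(i < N) (C i / 2 + C i ^+ 2 / (4 * m)) * sqn (Wh k.+1 i - Wh k i)
    <= \sum_(i < N) C i / m * (C i + m) * sqn (Wh k.+1 i - Wh k i).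
  rewrite mulr_sumr; apply: ler_sum => i _.
  rewrite mulrA; apply: ler_wpM2r; first exact: sqn_ge0.
  rewrite -subr_ge0 (_ : C i / m * (C i + m) - 2 * (C i / 2 + C i ^+ 2 / (4 * m)) = C i ^+ 2 / (2 * m)).
    by rewrite divr_ge0 ?sqr_ge0 // mulr_ge0 // ltW.
  by field; rewrite gt_eqF.
rewrite -/Z -EW in SN.
lra.
Qed.
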